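(* For every $1\le i\le n$ and every $v\in V$, the following identity holds in $H_\zeta'(\mathfrak{sp}_{2n})$: \[ \sum_{j=1}^{2n}\sum_{e\in B}\left\{\frac{\partial\mathcal{Q}_i}{\partial e},v\right\}e(v_j)\,v_j^*=0. \]
   Context: Let $V=\mathbb{C}^{2n}$ with basis $v_1,\dots,v_{2n}$ and symplectic form $\omega(x,y)=x^TJy$, where $J$ is block diagonal with $n$ blocks $\begin{pmatrix}0&1\\-1&0\end{pmatrix}$; $\mathfrak{sp}_{2n}=\{A:A^TJ+JA=0\}$ acting on $V$. Let $v_1^*,\dots,v_{2n}^*$ be the basis with $\omega(v_i,v_j^* )=\delta_{ij}$. Identify $S(\mathfrak{sp}_{2n})$ with polynomial functions of $A\in\mathfrak{sp}_{2n}$ via the trace form. $B$ is a basis of $\mathfrak{sp}_{2n}$; for $F\in S(\mathfrak{sp}_{2n})$ written as a polynomial in the elements of $B$, $\partial F/\partial e$ ($e\in B$) denotes the partial derivative with respect to $e$. For $j\ge0$ let $\mathfrak{r}_j(x,y)\in S(\mathfrak{sp}_{2n})$ be the coefficient of $z^j$ in $\omega(x,(1-z^2A^2)^{-1}y)\det(1-zA)^{-1}$; for $\zeta_0,\zeta_2,\dots,\zeta_{2k}\in\mathbb{C}$, $H_\zeta'(\mathfrak{sp}_{2n})$ is the commutative algebra $S(\mathfrak{sp}_{2n})\otimes S(V)$ with the Poisson bracket determined by $\{a,b\}=[a,b]$ ($a,b\in\mathfrak{sp}_{2n}$), $\{g,v\}=g(v)$ ($g\in\mathfrak{sp}_{2n}$,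 $v\in V$), $\{x,y\}=\sum_j\zeta_{2j}\mathfrak{r}_{2j}(x,y)$ ($x,y\in V$). Define $\mathcal{Q}_i\in S(\mathfrak{sp}_{2n})$ by $\sum_{i=0}^n\mathcal{Q}_iz^{2i}=\det(1-zA)$. *)

(* Defs.v *)
From HB Require Import structures.
From mathcomp Require Import all_boot all_order all_algebra.
From mathcomp Require Import reals complex.
From mathcomp Require Import mpoly.

Set Implicit Arguments.
Unset Strict Implicit.
Unset Printing Implicit Defensive.

Import Order.TTheory GRing.Theory Num.Theory.
Local Open Scope ring_scope.

Section SpDefs.
Variable C : fieldType.

(* The symplectic Gram matrix J on C^(2n): block diagonal with n blocks
   [[0,1],[-1,0]].  Basis vectors v_1..v_2n are the indices 0..2n-1. *)
Definition Jmx (n : nat) : 'M[C]_(2 * n) :=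
  \matrix_(i, j)
    (if ~~ odd i && (j == i.+1 :> nat) then 1
     else if odd i && (j.+1 == i :> nat) then -1 else 0).

Definition omega (n : nat) (x y : 'cV[C]_(2 * n)) : C := (x^T *m Jmx n *m y) 0 0.

Definition is_sp (n : nat) (A : 'M[C]_(2 * n)) : Prop :=
  A^T *m Jmx n + Jmx n *m A = 0.

Definition is_basis_sp (n m : nat) (B : 'I_m -> 'M[C]_(2 * n)) : Prop :=
  [/\ forall k, is_sp (B k),
      (forall c : 'I_m -> C, \sum_k c k *: B k = 0 -> forall k, c k = 0)
    & forall A, is_sp A -> exists c : 'I_m -> C, A = \sum_k c k *: B k].

(* the standard basis vector v_j and the dual vector vstar_j determined by
   omega(v_i, v_j^star) = delta_ij, i.e. J vstar_j = v_j *)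
Definition vbas (n : nat) (j : 'I_(2 * n)) : 'cV[C]_(2 * n) := delta_mx j 0.
Definition vstar (n : nat) (j : 'I_(2 * n)) : 'cV[C]_(2 * n) :=
  invmx (Jmx n) *m vbas j.

(* The commutative algebra S(sp_2n) (x) S(V), realised as the polynomial
   ring in m + 2n variables: 'X_(xi k) stands for the basis element B k of
   sp_2n, and 'X_(yi j) stands for the basis vector v_j of V. *)

Definition xi (n m : nat) (k : 'I_m) : 'I_(m + 2 * n) := lshift (2 * n) k.
Definition yi (n m : nat) (j : 'I_(2 * n)) : 'I_(m + 2 * n) := rshift m j.

Definition linV (n m : nat) (u : 'cV[C]_(2 * n)) : {mpoly C[m + 2 * n]} :=
  \sum_(j < 2 * n) (u j 0)%:MP * 'X_(yi m j).

Definition gramB (n m : nat) (B : 'I_m -> 'M[C]_(2 * n)) : 'M[C]_m :=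
  \matrix_(k, l) \tr (B k *m B l).
Definition dualB (n m : nat) (B : 'I_m -> 'M[C]_(2 * n)) (k : 'I_m)
  : 'M[C]_(2 * n) := \sum_l invmx (gramB B) k l *: B l.

(* The "generic element" A of sp_2n with entries in S(sp_2n): identifying
   S(sp_2n) with polynomial functions of A via the trace form, the basis
   element B k is the function A |-> tr(B k * A); writing A in the
   trace-dual basis, A = sum_k x_k (dualB k), this function is x_k. *)
Definition genA (n m : nat) (B : 'I_m -> 'M[C]_(2 * n)) : 'M[{mpoly C[m + 2 * n]}]_(2 * n) :=
  \sum_k 'X_(xi n k) *: map_mx (fun c : C => c%:MP) (dualB B k).

Definition Qcoef (n m : nat) (B : 'I_m -> 'M[C]_(2 * n)) (i : nat) : {mpoly C[m + 2 * n]} :=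
  (\det (1%:M - 'X *: map_mx polyC (genA B)))`_(2 * i).

Definition pder (n m : nat) (k : 'I_m) (F : {mpoly C[m + 2 * n]}) : {mpoly C[m + 2 * n]} :=
  mderiv (xi n k) F.

(* Poisson bracket {F, v} for F in S(sp_2n), v in V, determined by
   {g, v} = g(v) and the Leibniz rule: {F, v} = sum_e dF/de * e(v). *)
Definition brSV (n m : nat) (B : 'I_m -> 'M[C]_(2 * n)) (F : {mpoly C[m + 2 * n]})
    (v : 'cV[C]_(2 * n)) : {mpoly C[m + 2 * n]} :=
  \sum_k pder k F * linV m (B k *m v).

End SpDefs.

Arguments Jmx {C} n.
Arguments vbas {C n} j.
Arguments vstar {C n} j.

(* Main.v *)
Require Import Defs.
From HB Require Import structures.
From mathcomp Require Import all_boot all_order all_algebra.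
From mathcomp Require Import reals complex.
From mathcomp Require Import mpoly.
From mathcomp Require Import fingroup perm.
From mathcomp Require Import ring.
Import GRing.Theory.
Local Open Scope ring_scope.
Set Implicit Arguments.
Unset Strict Implicit.
Unset Printing Implicit Defensive.

Section Der.
Variable S : comNzRingType.
Variable d : S -> S.
Hypothesis dD : forall x y, d (x + y) = d x + d y.
Hypothesis dM : forall x y, d (x * y) = d x * y + x * d y.

Lemma d0 : d 0 = 0.
Proof. by apply/(addrI (d 0)); rewrite -dD !addr0. Qed.
Lemma dN x : d (- x) = - d x.
Proof. by apply/(addrI (d x)); rewrite -dD !subrr d0. Qed.
Lemma d1 : d 1 = 0.
Proof. have := dM 1 1; rewrite !mulr1 !mul1r => h; apply/(addrI (d 1)); by rewrite -h addr0. Qed.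
Lemma d_sum (I : Type) (r : seq I) (P : pred I) (F : I -> S) :
  d (\sum_(i <- r | P i) F i) = \sum_(i <- r | P i) d (F i).
Proof. exact: (big_morph d dD d0). Qed.
Lemma d_sign k : d ((-1) ^+ k) = 0.
Proof.
elim: k => [|k IH]; first by rewrite expr0 d1.
by rewrite exprS dM IH mulr0 addr0 dN d1 oppr0 mul0r.
Qed.

Lemma d_prod k (F : 'I_k -> S) :
  d (\prod_i F i) = \sum_i \prod_j (if j == i then d (F j) else F j).
Proof.
elim: k F => [|k IH] F; first by rewrite !big_ord0 d1.
rewrite big_ord_recr /= dM IH big_distrl /= big_ord_recr /=; congr (_ + _).
  apply: eq_bigr => i _; rewrite big_ord_recr /=.
  have -> : (ord_max == widen_ord (leqnSn k) i) = false.
    by apply/negbTE; rewrite -val_eqE /= neq_ltn ltn_ord orbT.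
  by [].
rewrite big_ord_recr /= eqxx; congr (_ * _); apply: eq_bigr => j _.
have -> : (widen_ord (leqnSn k) j == ord_max) = false.
  by apply/negbTE; rewrite -val_eqE /= neq_ltn ltn_ord.
by [].
Qed.

Lemma cofactor_row k (A A' : 'M[S]_k) i j :
  (forall a b, a != i -> A' a b = A a b) -> cofactor A' i j = cofactor A i j.
Proof.
move=> H; rewrite /cofactor; congr (_ * \det _).
by apply/matrixP => a b; rewrite !mxE H // eq_sym neq_lift.
Qed.

Lemma d_det k (U : 'M[S]_k) : d (\det U) = \tr (map_mx d U *m \adj U).
Proof.
rewrite /determinant d_sum.
transitivity (\sum_i \sum_(s : 'S_k) (-1) ^+ s *
   \prod_j (\matrix_(a, b) (if a == i then d (U a b) else U a b)) j (s j)).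
  rewrite exchange_big /=; apply: eq_bigr => s _.
  rewrite dM d_sign mul0r add0r d_prod big_distrr /=; apply: eq_bigr => i _.
  by congr (_ * _); apply: eq_bigr => j _; rewrite mxE; case: (j == i).
rewrite /mxtrace; apply: eq_bigr => i _.
rewrite -/(determinant _) (expand_det_row _ i) mxE; apply: eq_bigr => b _.
rewrite (@cofactor_row _ U); last by move=> a c /negbTE Hc; rewrite mxE Hc.
by rewrite !mxE eqxx.
Qed.

Lemma d_mulmx p q r (A : 'M[S]_(p, q)) (B : 'M[S]_(q, r)) :
  map_mx d (A *m B) = map_mx d A *m B + A *m map_mx d B.
Proof.
apply/matrixP => a b; rewrite !mxE d_sum -big_split; apply: eq_bigr => c _.
by rewrite dM !mxE.
Qed.

Lemma d_scalar k a : map_mx d (a%:M : 'M[S]_k) = (d a)%:M.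
Proof. by apply/matrixP => i j; rewrite !mxE; case: (i == j); rewrite ?mulr1n ?mulr0n ?d0. Qed.

Lemma d_tr k (A : 'M[S]_k) : d (\tr A) = \tr (map_mx d A).
Proof. by rewrite /mxtrace d_sum; apply: eq_bigr => i _; rewrite mxE. Qed.

Lemma d_adj k (U : 'M[S]_k) :
  \det U *: map_mx d (\adj U) =
  \tr (map_mx d U *m \adj U) *: \adj U - \adj U *m map_mx d U *m \adj U.
Proof.
have h := congr1 (map_mx d) (mul_adj_mx U).
rewrite d_mulmx d_scalar d_det in h.
have h2 := congr1 (fun X => X *m \adj U) h; rewrite /= mulmxDl -mulmxA mul_mx_adj in h2.
rewrite mul_mx_scalar mul_scalar_mx in h2.
by rewrite -h2 addrK.
Qed.

End Der.

Lemma d2_det (S : comNzRingType) (d1 d2 : S -> S)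
  (dD1 : forall x y, d1 (x + y) = d1 x + d1 y)
  (dM1 : forall x y, d1 (x * y) = d1 x * y + x * d1 y)
  (dD2 : forall x y, d2 (x + y) = d2 x + d2 y)
  (dM2 : forall x y, d2 (x * y) = d2 x * y + x * d2 y)
  k (U : 'M[S]_k) :
  map_mx d2 (map_mx d1 U) = 0 ->
  \det U * d2 (d1 (\det U)) =
  \tr (map_mx d2 U *m \adj U) * \tr (map_mx d1 U *m \adj U)
  - \tr (map_mx d1 U *m \adj U *m map_mx d2 U *m \adj U).
Proof.
move=> h.
rewrite (d_det dD1 dM1) (d_tr dD2) (d_mulmx dD2 dM2) h mul0mx add0r.
rewrite -[LHS]mxtraceZ [in LHS]scalemxAr (d_adj dD2 dM2) mulmxBr raddfB /= -scalemxAr mxtraceZ.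
by rewrite mulrC !mulmxA.
Qed.

Lemma tr_rank1 (S : comNzRingType) k (u w : 'cV[S]_k) (X : 'M[S]_k) :
  \tr (u *m w^T *m X) = (w^T *m X *m u) 0 0.
Proof. by rewrite -mulmxA mxtrace_mulC /mxtrace big_ord1. Qed.

Lemma mx11_mul (S : comNzRingType) (X Y : 'M[S]_1) : (X *m Y) 0 0 = X 0 0 * Y 0 0.
Proof. by rewrite !mxE big_ord1. Qed.

Lemma trace_id (S : comNzRingType) k (a : 'M[S]_k) (u w p r : 'cV[S]_k) (h : S) :
  \tr (h *: (p *m w^T + u *m r^T) *m a) * \tr (u *m w^T *m a)
  = \tr (u *m w^T *m a *m (h *: (p *m w^T + u *m r^T)) *m a).
Proof.
have e1 := tr_rank1 u w (a *m (h *: (p *m w^T + u *m r^T)) *m a).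
rewrite !mulmxA in e1; rewrite e1.
have E : w^T *m a *m (p *m w^T + u *m r^T) *m a *m u =
   (w^T *m a *m p) *m (w^T *m a *m u) + (w^T *m a *m u) *m (r^T *m a *m u).
  by rewrite mulmxDr !mulmxDl !mulmxA.
rewrite -[w^T *m a *m (h *: _)]scalemxAr -!scalemxAl E.
rewrite mxE [in RHS]mxE !mx11_mul mxtraceZ mulmxDl mxtraceD !tr_rank1.
by rewrite -mulrA mulrDl [_ * (r^T *m a *m u) 0 0]mulrC.
Qed.

Section JFacts.
Variable C : fieldType.
Variable n : nat.

Definition jf (a b : nat) : C :=
  if ~~ odd a && (b == a.+1) then 1 else if odd a && (b.+1 == a) then -1 else 0.
Definition pn (a : nat) := if odd a then a.-1 else a.+1.
Definition sg (a : nat) : C := if odd a then -1 else 1.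

Lemma JmxE (a b : 'I_(2 * n)) : Jmx n a b = jf a b :> C.
Proof. by rewrite mxE. Qed.

Lemma jf_row a b : jf a b = if b == pn a then sg a else 0.
Proof.
rewrite /jf /pn /sg; case: a => [|a] //=.
by case: (odd a) => //=.
Qed.

Lemma pnK a : pn (pn a) = a.
Proof.
rewrite /pn; case: a => [|a] //=; case Ha: (odd a) => //=; by rewrite Ha.
Qed.

Lemma sg_pn a : sg (pn a) = - sg a.
Proof.
rewrite /pn /sg; case: a => [|a] //=.
case Ha: (odd a) => //=; rewrite ?Ha ?opprK //.
Qed.

Lemma sg2 a : sg a * sg a = 1.
Proof. by rewrite /sg; case: (odd a); rewrite ?mulrNN mulr1. Qed.

Lemma pn_lt a : (a < 2 * n)%N -> (pn a < 2 * n)%N.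
Proof.
rewrite /pn; case Ha: (odd a) => Hlt.
  exact: leq_ltn_trans (leq_pred a) Hlt.
rewrite ltn_neqAle Hlt andbT; apply/eqP => E.
by move: (congr1 odd E); rewrite /= Ha oddM.
Qed.

Lemma jf_tr a b : jf b a = - jf a b.
Proof.
rewrite !jf_row; have [->|ne] := eqVneq a (pn b).
  by rewrite pnK eqxx sg_pn opprK.
have -> : (b == pn a) = false.
  by apply/negbTE; apply: contra ne => /eqP ->; rewrite pnK.
by rewrite oppr0.
Qed.

Lemma Jtr : (Jmx n)^T = - Jmx n :> 'M[C]_(2 * n).
Proof. by apply/matrixP => a b; rewrite mxE [RHS]mxE !JmxE jf_tr. Qed.

Lemma JJ : Jmx n *m Jmx n = - 1%:M :> 'M[C]_(2 * n).
Proof.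
apply/matrixP => a b; rewrite [LHS]mxE.
under eq_bigr => c _ do rewrite !JmxE.
pose pa := Ordinal (pn_lt (ltn_ord a)).
rewrite (bigD1 pa) //= big1 ?addr0; last first.
  move=> c /negbTE Hc; rewrite jf_row.
  by move: Hc; rewrite -val_eqE /= => ->; rewrite mul0r.
rewrite !mxE [jf a _]jf_row eqxx [jf _ b]jf_row pnK sg_pn.
rewrite eq_sym -val_eqE /=.
by case: (_ == _); rewrite ?mulrN ?sg2 ?mulr0 ?mulr1n ?mulr0n ?oppr0.
Qed.

Lemma JtJ : (Jmx n)^T *m Jmx n = 1%:M :> 'M[C]_(2 * n).
Proof. by rewrite Jtr mulNmx JJ opprK. Qed.

Lemma JJt : Jmx n *m (Jmx n)^T = 1%:M :> 'M[C]_(2 * n).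
Proof. by rewrite Jtr mulmxN JJ opprK. Qed.

Lemma invJ : invmx (Jmx n) = - Jmx n :> 'M[C]_(2 * n).
Proof.
have h : Jmx n *m (- Jmx n) = 1%:M :> 'M[C]_(2 * n) by rewrite mulmxN JJ opprK.
have [uJ _] := mulmx1_unit h.
by rewrite -[invmx _]mulmx1 -h mulmxA mulVmx // mul1mx.
Qed.

End JFacts.

Lemma trD (R : nmodType) p q (A B : 'M[R]_(p, q)) : (A + B)^T = A^T + B^T.
Proof. by apply/matrixP => i j; rewrite !mxE. Qed.
Lemma trZ (R : pzRingType) p q a (A : 'M[R]_(p, q)) : (a *: A)^T = a *: A^T.
Proof. by apply/matrixP => i j; rewrite !mxE. Qed.
Lemma trN (R : zmodType) p q (A : 'M[R]_(p, q)) : (- A)^T = - A^T.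
Proof. by apply/matrixP => i j; rewrite !mxE. Qed.

Section Basis.
Variable C : fieldType.
Hypothesis h2 : (2%:R : C) != 0.
Variables n m : nat.
Variable B : 'I_m -> 'M[C]_(2 * n).
Local Notation Jm := (Jmx n : 'M[C]_(2 * n)).

Definition projsp (E : 'M[C]_(2 * n)) := 2^-1 *: (E + Jm *m E^T *m Jm).

Lemma half2 (x : C) : 2^-1 * (x + x) = x.
Proof. by rewrite -mulr2n -[x *+ 2]mulr_natl mulrA mulVf // mul1r. Qed.

Lemma projsp_sp E : is_sp (projsp E).
Proof.
rewrite /is_sp /projsp trZ -scalemxAl -scalemxAr -scalerDr.
rewrite trD !trmx_mul trmxK (Jtr C n).
have e1 : - Jm *m (E *m - Jm) = Jm *m E *m Jm by rewrite !mulmxN !mulNmx opprK mulmxA.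
rewrite e1 mulmxDl mulmxDr -!mulmxA [Jm *m (Jm *m _)]mulmxA !(JJ C n).
rewrite mulmxN mulmx1 mulNmx mul1mx.
by rewrite mulmxN addrA subrK subrr scaler0.
Qed.

Lemma sp_trJ A : is_sp A -> A^T = Jm *m A *m Jm.
Proof.
rewrite /is_sp => /eqP; rewrite addr_eq0 => /eqP h.
have -> : A^T = A^T *m Jm *m (- Jm) by rewrite -mulmxA mulmxN (JJ C n) opprK mulmx1.
by rewrite h mulNmx mulmxN opprK.
Qed.

Lemma tr_orth A E : is_sp A -> \tr (A *m (Jm *m E^T *m Jm)) = \tr (A *m E).
Proof.
move=> hA; rewrite -mxtrace_tr !trmx_mul trmxK (sp_trJ hA) !mulmxA.
rewrite -[_ *m Jm^T *m Jm]mulmxA (JtJ C n) mulmx1 mxtrace_mulC !mulmxA (JJt C n) mul1mx.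
exact: mxtrace_mulC.
Qed.

Lemma tr_proj A E : is_sp A -> \tr (A *m projsp E) = \tr (A *m E).
Proof.
move=> hA; rewrite /projsp -scalemxAr mxtraceZ mulmxDr mxtraceD.
by rewrite tr_orth // half2.
Qed.


Lemma tr_delta (A : 'M[C]_(2 * n)) i j : \tr (A *m delta_mx i j) = A j i.
Proof.
rewrite /mxtrace (bigD1 j) //= big1 ?addr0; last first.
  move=> p pj; rewrite mxE big1 // => q _; rewrite mxE (negbTE pj) andbF mulr0 //.
rewrite mxE (bigD1 i) //= big1 ?addr0; last first.
  by move=> q qi; rewrite mxE (negbTE qi) mulr0.
by rewrite mxE !eqxx mulr1.
Qed.

Lemma sp_lin (c : 'I_m -> C) : (forall k, is_sp (B k)) -> is_sp (\sum_k c k *: B k).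
Proof.
move=> hB; rewrite /is_sp.
have -> : (\sum_k c k *: B k)^T = \sum_k c k *: (B k)^T.
  by apply/matrixP => a b; rewrite mxE !summxE; apply: eq_bigr => k _; rewrite !mxE.
rewrite mulmx_suml mulmx_sumr -big_split big1 // => k _.
by rewrite /= -scalemxAl -scalemxAr -scalerDr (hB k) scaler0.
Qed.


Lemma gram_unit : is_basis_sp B -> gramB B \in unitmx.
Proof.
case=> hB hind hspan.
rewrite unitmxE unitfE; apply/negP => /det0P [v vn0 hv].
pose X := \sum_k v 0 k *: B k.
have hX : is_sp X := sp_lin (fun k => v 0 k) hB.
have h1 l : \tr (X *m B l) = 0.
  have := congr1 (fun M : 'M[C]_(1, m) => M 0 l) hv; rewrite !mxE => <-.
  rewrite mulmx_suml raddf_sum /=; apply: eq_bigr => k _.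
  by rewrite -scalemxAl mxtraceZ !mxE.
have h2' E : \tr (X *m E) = 0.
  rewrite -(tr_proj E hX).
  have [c ->] := hspan _ (projsp_sp E).
  rewrite mulmx_sumr raddf_sum /= big1 // => l _.
  by rewrite -scalemxAr mxtraceZ h1 mulr0.
have X0 : X = 0.
  by apply/matrixP => a b; rewrite [RHS]mxE -(tr_delta X b a) h2'.
apply: (negP vn0); apply/eqP/matrixP => a k; rewrite (ord1 a) [RHS]mxE.
exact: hind _ X0 k.
Qed.

Lemma basis_expand : is_basis_sp B ->
  forall X, is_sp X -> \sum_k \tr (B k *m X) *: dualB B k = X.
Proof.
move=> hb; have gu := gram_unit hb; case: hb => hB hind hspan X /hspan [c ->].
pose cv : 'rV[C]_m := \row_p c p.
have e1 k : \tr (B k *m \sum_p c p *: B p) = (cv *m gramB B) 0 k.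
  rewrite mulmx_sumr raddf_sum /= mxE; apply: eq_bigr => p _.
  by rewrite -scalemxAr mxtraceZ !mxE mxtrace_mulC.
under eq_bigr do rewrite e1.
rewrite /dualB.
transitivity (\sum_l (\sum_k (cv *m gramB B) 0 k * invmx (gramB B) k l) *: B l).
  under eq_bigr do rewrite scaler_sumr.
  rewrite exchange_big /=; apply: eq_bigr => l _; rewrite scaler_suml.
  by apply: eq_bigr => k _; rewrite scalerA.
apply: eq_bigr => l _.
have -> : \sum_k (cv *m gramB B) 0 k * invmx (gramB B) k l
          = (cv *m gramB B *m invmx (gramB B)) 0 l.
  by rewrite [RHS]mxE.
by rewrite mulmxK // mxE.
Qed.

Lemma proj_expand : is_basis_sp B ->
  forall E, \sum_k \tr (B k *m E) *: dualB B k = projsp E.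
Proof.
move=> hb E; have hb' := hb; case: hb' => hB _ _.
under eq_bigr => k _ do rewrite -(tr_proj E (hB k)).
exact: basis_expand hb _ (projsp_sp E).
Qed.

Lemma mul_delta_r p (A : 'M[C]_(p, 2 * n)) (i j : 'I_(2 * n)) (a : 'I_p) (c : 'I_(2 * n)) :
  (A *m delta_mx i j) a c = A a i * (c == j)%:R.
Proof.
rewrite mxE (bigD1 i) //= big1 ?addr0; last first.
  by move=> q qi; rewrite mxE (negbTE qi) mulr0.
by rewrite mxE eqxx.
Qed.

Lemma sandwich (A A' : 'M[C]_(2 * n)) i j a b :
  (A *m delta_mx i j *m A') a b = A a i * A' j b.
Proof.
rewrite mxE (bigD1 j) //= big1 ?addr0; last first.
  by move=> q qj; rewrite mul_delta_r (negbTE qj) mulr0 mul0r.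
by rewrite mul_delta_r eqxx mulr1.
Qed.

Lemma coef_ident : is_basis_sp B -> forall a b i j,
  \sum_k B k i j * dualB B k a b
  = 2^-1 * (((a == j) && (b == i))%:R + Jm a i * Jm j b).
Proof.
move=> hb a b i j.
have := congr1 (fun M : 'M[C]_(2 * n) => M a b) (proj_expand hb (delta_mx j i)).
rewrite summxE; under eq_bigr do rewrite mxE tr_delta.
move=> ->; rewrite /projsp trmx_delta.
by rewrite [LHS]mxE; congr (_ * _); rewrite [LHS]mxE sandwich [delta_mx _ _ _ _]mxE.
Qed.

End Basis.

Section PolyDer.
Variable R : comNzRingType.
Variable D : R -> R.
Hypothesis dD : forall x y, D (x + y) = D x + D y.
Hypothesis dM : forall x y, D (x * y) = D x * y + x * D y.

Lemma pD (p q : {poly R}) : map_poly D (p + q) = map_poly D p + map_poly D q.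
Proof. by apply/polyP => i; rewrite coefD !coef_map_id0 ?(d0 dD) // coefD dD. Qed.

Lemma pM (p q : {poly R}) : map_poly D (p * q) = map_poly D p * q + p * map_poly D q.
Proof.
apply/polyP => i; rewrite coefD !coefM coef_map_id0 ?(d0 dD) // coefM (d_sum dD) -big_split.
by apply: eq_bigr => j _; rewrite dM !coef_map_id0 ?(d0 dD).
Qed.

Lemma pC (c : R) : map_poly D c%:P = (D c)%:P.
Proof. by apply/polyP => i; rewrite coef_map_id0 ?(d0 dD) // !coefC; case: (i == 0%N); rewrite ?(d0 dD). Qed.

Lemma pXM (p : {poly R}) : map_poly D ('X * p) = 'X * map_poly D p.
Proof. by apply/polyP => i; rewrite coef_map_id0 ?(d0 dD) // !coefXM; case: (i == 0%N); rewrite ?(d0 dD) ?coef_map_id0 ?(d0 dD). Qed.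

Lemma coef_pD (p : {poly R}) i : D (p`_i) = (map_poly D p)`_i.
Proof. by rewrite coef_map_id0 ?(d0 dD). Qed.
End PolyDer.

Lemma mderiv_X (C : fieldType) k (i j : 'I_k) :
  mderiv i ('X_j : {mpoly C[k]}) = (j == i)%:R.
Proof.
rewrite mderivX mnm1E; case: eqP => [->|_].
  have -> : (U_(i) - U_(i))%MM = 0%MM by apply/mnmP => t; rewrite mnmBE subnn mnm0E.
  by rewrite mpolyX0 scale1r.
by rewrite scale0r.
Qed.

Section DcSec.
Variable C : fieldType.
Variables n m : nat.
Local Notation P := {mpoly C[m + 2 * n]}.

Definition Dc (c : 'I_m -> P) (F : P) : P := \sum_k c k * pder k F.

Lemma DcD c x y : Dc c (x + y) = Dc c x + Dc c y.
Proof. by rewrite /Dc -big_split; apply: eq_bigr => k _; rewrite /pder mderivD mulrDr. Qed.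

Lemma DcM c x y : Dc c (x * y) = Dc c x * y + x * Dc c y.
Proof.
rewrite /Dc big_distrl big_distrr -big_split; apply: eq_bigr => k _ /=.
by rewrite /pder mderivM mulrDr !mulrA [c k * x]mulrC.
Qed.

Lemma DcC c a : Dc c a%:MP = 0.
Proof. by rewrite /Dc big1 // => k _; rewrite /pder mderivC mulr0. Qed.

Lemma Dc_Xx c l : Dc c 'X_(xi n l) = c l.
Proof.
rewrite /Dc (bigD1 l) //= big1 ?addr0.
  by rewrite /pder mderiv_X eqxx mulr1.
move=> k kl; rewrite /pder mderiv_X.
have -> : (xi n l == xi n k) = false.
  by apply/negbTE; apply: contra kl => /eqP/(congr1 val) /= h; rewrite eq_sym; apply/eqP/val_inj.
by rewrite mulr0.
Qed.

Lemma Dc_Xy c j : Dc c 'X_(yi m j) = 0.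
Proof.
rewrite /Dc big1 // => k _; rewrite /pder mderiv_X.
by rewrite /xi /yi eq_rlshift mulr0.
Qed.

Lemma Dc_sum c (I : Type) (r : seq I) (Pr : pred I) (F : I -> P) :
  Dc c (\sum_(i <- r | Pr i) F i) = \sum_(i <- r | Pr i) Dc c (F i).
Proof. exact: (d_sum (DcD c)). Qed.

Lemma Dc_linV c (u : 'cV[C]_(2 * n)) : Dc c (linV m u) = 0.
Proof.
rewrite /linV Dc_sum big1 // => j _.
by rewrite DcM DcC Dc_Xy mul0r mulr0 addr0.
Qed.

End DcSec.

Section Main.
Variable C : fieldType.
Hypothesis h2 : (2%:R : C) != 0.
Variables n m : nat.
Variable B : 'I_m -> 'M[C]_(2 * n).
Hypothesis hb : is_basis_sp B.
Local Notation P := {mpoly C[m + 2 * n]}.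
Local Notation Jm := (Jmx n : 'M[C]_(2 * n)).
Local Notation cP := (@mpolyC (m + 2 * n) C).
Definition Jp : 'M[P]_(2 * n) := map_mx cP Jm.
Definition Bp k : 'M[P]_(2 * n) := map_mx cP (B k).
Definition hP : P := cP 2^-1.

Lemma trBp k (X : 'M[P]_(2 * n)) :
  \tr (Bp k *m X) = \sum_i \sum_j X j i * cP (B k i j).
Proof.
rewrite /mxtrace; apply: eq_bigr => i _; rewrite mxE; apply: eq_bigr => j _.
by rewrite mxE mulrC.
Qed.

Lemma phi_ident (X : 'M[P]_(2 * n)) a b :
  \sum_k \tr (Bp k *m X) * cP (dualB B k a b)
  = hP * (X a b + (Jp *m X^T *m Jp) a b).
Proof.
transitivity (\sum_k \sum_i \sum_j X j i * (cP (B k i j) * cP (dualB B k a b))).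
  apply: eq_bigr => k _; rewrite trBp mulr_suml; apply: eq_bigr => i _.
  by rewrite mulr_suml; apply: eq_bigr => j _; rewrite mulrA.
rewrite exchange_big /=; under eq_bigr do rewrite exchange_big /=.
transitivity (\sum_i \sum_j X j i * cP (2^-1 * (((a == j) && (b == i))%:R + Jm a i * Jm j b))).
  apply: eq_bigr => i _; apply: eq_bigr => j _.
  rewrite -(coef_ident h2 hb) rmorph_sum mulr_sumr; apply: eq_bigr => k _.
  by rewrite rmorphM.
have e : forall x y : C, cP (2^-1 * (x + y)) = hP * (cP x + cP y).
  by move=> x y; rewrite /hP rmorphM rmorphD.
under eq_bigr do under eq_bigr do rewrite e mulrCA.
under eq_bigr do rewrite -mulr_sumr.
rewrite -mulr_sumr; congr (hP * _).
under eq_bigr do under eq_bigr do rewrite mulrDr.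
under eq_bigr do rewrite big_split /=.
rewrite big_split /=; congr (_ + _).
  rewrite (bigD1 b) //= [X in _ + X]big1 ?addr0; last first.
    move=> i /negbTE bi; rewrite big1 // => j _.
    by rewrite [b == i]eq_sym bi andbF mulr0n rmorph0 mulr0.
  rewrite (bigD1 a) //= [X in _ + X]big1 ?addr0; last first.
    by move=> j /negbTE aj; rewrite [a == j]eq_sym aj mulr0n rmorph0 mulr0.
  by rewrite !eqxx mulr1n rmorph1 mulr1.
rewrite [RHS]mxE exchange_big; apply: eq_bigr => j _.
rewrite [(Jp *m _) a j]mxE mulr_suml; apply: eq_bigr => i _.
rewrite [X^T i j]mxE /Jp [map_mx _ _ a i]mxE [map_mx _ _ j b]mxE rmorphM.
by rewrite mulrA [X j i * _]mulrC.
Qed.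

Definition yv : 'cV[P]_(2 * n) := \col_a 'X_(yi m a).

Lemma linV_E (u : 'cV[C]_(2 * n)) : linV m u = \sum_a cP (u a 0) * yv a 0.
Proof. by rewrite /linV; apply: eq_bigr => a _; rewrite mxE. Qed.

Lemma colmul_delta (A : 'M[C]_(2 * n)) (j a : 'I_(2 * n)) :
  (A *m delta_mx j (0 : 'I_1)) a 0 = A a j.
Proof.
rewrite mxE (bigD1 j) //= big1 ?addr0; last first.
  by move=> t /negbTE tj; rewrite mxE tj mulr0.
by rewrite mxE !eqxx mulr1.
Qed.

Definition qv k : P := \sum_j linV m (B k *m vbas j) * linV m (vstar j).
Definition muv (v : 'cV[C]_(2 * n)) l : P := linV m (B l *m v).

Lemma q_tr k : qv k = \tr (Bp k *m (Jp *m yv *m yv^T)).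
Proof.
rewrite trBp /qv.
transitivity (\sum_j \sum_a \sum_c cP (B k a j) * yv a 0 * (cP (Jm j c) * yv c 0)).
  apply: eq_bigr => j _; rewrite !linV_E mulr_suml; apply: eq_bigr => a _.
  rewrite mulr_sumr; apply: eq_bigr => c _.
  rewrite /vbas colmul_delta /vstar (invJ C n) colmul_delta mxE.
  by rewrite -(Jtr C n) [_^T c j]mxE.
rewrite exchange_big; apply: eq_bigr => a _; apply: eq_bigr => j _.
rewrite [(_ *m yv^T) j a]mxE big_ord1 [yv^T 0 a]mxE [(Jp *m yv) j 0]mxE.
rewrite !mulr_suml; apply: eq_bigr => c _.
rewrite /Jp [map_mx _ _ j c]mxE.
by ring.
Qed.

Lemma mu_tr (v : 'cV[C]_(2 * n)) l : muv v l = \tr (Bp l *m (map_mx cP v *m yv^T)).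
Proof.
rewrite /muv linV_E trBp; apply: eq_bigr => a _.
rewrite [(B l *m v) a 0]mxE rmorph_sum mulr_suml; apply: eq_bigr => b _.
rewrite [(_ *m yv^T) b a]mxE big_ord1 [yv^T 0 a]mxE [map_mx _ v b 0]mxE rmorphM.
by ring.
Qed.

Lemma genA_E a b : genA B a b = \sum_k 'X_(xi n k) * cP (dualB B k a b).
Proof. by rewrite /genA summxE; apply: eq_bigr => k _; rewrite !mxE. Qed.

Lemma DcG c a b : Dc c (genA B a b) = \sum_k c k * cP (dualB B k a b).
Proof.
rewrite genA_E Dc_sum; apply: eq_bigr => k _.
by rewrite DcM Dc_Xx DcC mulr0 addr0.
Qed.

Lemma hP2 (x : P) : hP * (x + x) = x.
Proof.
rewrite -mulr2n -[x *+ 2]mulr_natl mulrA /hP -(rmorph_nat cP) -rmorphM mulVf //.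
by rewrite rmorph1 mul1r.
Qed.

Lemma JpTJp : Jp^T *m Jp = 1%:M.
Proof. by rewrite /Jp map_trmx -map_mxM (JtJ C n) map_mx1. Qed.

Lemma Gq a b : Dc qv (genA B a b) = (Jp *m yv *m yv^T) a b.
Proof.
rewrite DcG; under eq_bigr do rewrite q_tr.
rewrite phi_ident !trmx_mul trmxK !mulmxA -[_ *m Jp^T *m Jp]mulmxA JpTJp mulmx1.
exact: hP2.
Qed.

Lemma Gm (v : 'cV[C]_(2 * n)) a b :
  Dc (muv v) (genA B a b) =
  (hP *: (map_mx cP v *m yv^T + Jp *m yv *m (map_mx cP v)^T *m Jp)) a b.
Proof.
rewrite DcG; under eq_bigr do rewrite mu_tr.
by rewrite phi_ident trmx_mul trmxK !mulmxA [RHS]mxE; congr (_ * _); rewrite [RHS]mxE.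
Qed.
End Main.

Lemma final_trace (S : comNzRingType) k (a : 'M[S]_k) (s h : S) (u w p r : 'cV[S]_k) :
  \tr ((- (s *: (h *: (p *m w^T + u *m r^T)))) *m a) * \tr ((- (s *: (u *m w^T))) *m a)
  - \tr ((- (s *: (u *m w^T))) *m a *m (- (s *: (h *: (p *m w^T + u *m r^T)))) *m a) = 0.
Proof.
have T := trace_id a u w p r h.
rewrite -!scalemxAl -!scalemxAr -!scalemxAl !mxtraceZ in T.
rewrite -!scaleNr -!scalemxAl -!scalemxAr -!scalemxAl !mxtraceZ -T.
by ring.
Qed.

Section Final.
Variable C : fieldType.
Hypothesis h2 : (2%:R : C) != 0.
Variables n m : nat.
Variable B : 'I_m -> 'M[C]_(2 * n).
Hypothesis hb : is_basis_sp B.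
Local Notation P := {mpoly C[m + 2 * n]}.
Local Notation cP := (@mpolyC (m + 2 * n) C).

Definition Umx : 'M[{poly P}]_(2 * n) := 1%:M - 'X *: map_mx polyC (genA B).

Lemma lhs_eq (v : 'cV[C]_(2 * n)) (Q : P) :
  \sum_(j < 2 * n) \sum_(k < m) brSV B (pder k Q) v
       * linV m (B k *m vbas j) * linV m (vstar j)
  = Dc (muv B v) (Dc (qv B) Q).
Proof.
have eb F : brSV B F v = Dc (muv B v) F.
  by rewrite /brSV /Dc; apply: eq_bigr => l _; rewrite mulrC.
have eq0 c k : Dc c (qv B k) = 0.
  rewrite /qv Dc_sum big1 // => j _.
  by rewrite DcM !Dc_linV mul0r mulr0 addr0.
rewrite exchange_big /=.
transitivity (\sum_k Dc (muv B v) (pder k Q) * qv B k).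
  apply: eq_bigr => k _; rewrite eb /qv mulr_sumr; apply: eq_bigr => j _.
  by rewrite mulrA.
rewrite [Dc (qv B) Q]/Dc Dc_sum; apply: eq_bigr => k _.
by rewrite DcM eq0 mul0r add0r mulrC.
Qed.

Lemma Umx_E a b : Umx a b = (a == b)%:R - 'X * (genA B a b)%:P.
Proof. rewrite /Umx; move: (genA B) => G; by rewrite !mxE. Qed.

Lemma negX_E (G : 'M[P]_(2 * n)) a b :
  (- ('X *: map_mx polyC G)) a b = - ('X * (G a b)%:P) :> {poly P}.
Proof. by rewrite !mxE. Qed.

Lemma dU c : map_mx (map_poly (Dc c)) Umx = - ('X *: map_mx polyC (map_mx (Dc c) (genA B))).
Proof.
have dD := pD (@DcD C n m c). have dM := pM (@DcD C n m c) (@DcM C n m c).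
apply/matrixP => a b; rewrite [LHS]mxE Umx_E negX_E [map_mx _ _ a b]mxE.
rewrite dD (dN dD) (pXM (@DcD C n m c)) (pC (@DcD C n m c)).
case: (a == b); [rewrite (_ : true%:R = 1 :> {poly P}) // (d1 dM) | rewrite (_ : false%:R = 0 :> {poly P}) // (d0 dD)]; by rewrite add0r.
Qed.


Lemma rank1E (u w : 'cV[P]_(2 * n)) a b : (u *m w^T) a b = u a 0 * w b 0.
Proof. by rewrite !mxE big_ord1 mxE. Qed.

Lemma DcNq c a b : Dc c ((Jp C n m *m yv C n m *m (yv C n m)^T) a b) = 0.
Proof.
rewrite rank1E DcM.
have -> : Dc c (yv C n m b 0) = 0 by rewrite /yv mxE Dc_Xy.
rewrite mulr0 addr0.
have -> : Dc c ((Jp C n m *m yv C n m) a 0) = 0.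
  rewrite mxE Dc_sum big1 // => t _.
  by rewrite /Jp /yv !mxE DcM DcC Dc_Xy mulr0 mul0r addr0.
by rewrite mul0r.
Qed.

Lemma DDU v : map_mx (map_poly (Dc (muv B v))) (map_mx (map_poly (Dc (qv B))) Umx) = 0.
Proof.
have dD := pD (@DcD C n m (muv B v)).
rewrite dU; apply/matrixP => a b; rewrite [LHS]mxE negX_E [map_mx _ _ a b]mxE (Gq h2 hb).
rewrite (dN dD) (pXM (@DcD C n m _)) (pC (@DcD C n m _)) DcNq.
by rewrite [RHS]mxE polyC0 mulr0 oppr0.
Qed.

Lemma detn0 : \det Umx != 0.
Proof.
apply/eqP => H.
have E : map_mx (horner_eval 0) Umx = 1%:M.
  apply/matrixP => a b; rewrite [LHS]mxE Umx_E [RHS]mxE.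
  by rewrite rmorphB rmorph_nat rmorphM /= horner_evalE hornerX mul0r subr0.
have := det_map_mx (horner_eval (0 : P)) Umx.
rewrite E det1 H rmorph0 => /eqP.
by rewrite oner_eq0.
Qed.

Lemma main_poly v :
  map_poly (Dc (muv B v)) (map_poly (Dc (qv B)) (\det Umx)) = 0.
Proof.
have H := d2_det (pD (@DcD C n m (qv B))) (pM (@DcD C n m (qv B)) (@DcM C n m (qv B)))
                 (pD (@DcD C n m (muv B v))) (pM (@DcD C n m (muv B v)) (@DcM C n m (muv B v)))
                 (DDU v).
rewrite !dU in H.
have EQ : map_mx (Dc (qv B)) (genA B) = Jp C n m *m yv C n m *m (yv C n m)^T.
  by apply/matrixP => a b; rewrite mxE (Gq h2 hb).
have EM : map_mx (Dc (muv B v)) (genA B) = hP C n m *: (map_mx cP v *m (yv C n m)^T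
     + (Jp C n m *m yv C n m) *m ((Jp C n m)^T *m map_mx cP v)^T).
  by apply/matrixP => a b; rewrite mxE (Gm h2 hb) trmx_mul trmxK !mulmxA.
rewrite EQ EM in H.
set u := Jp C n m *m yv C n m in EQ EM H.
set w := yv C n m in EQ EM H.
set p := map_mx cP v in EM H.
set r := (Jp C n m)^T *m p in EM H.
set h := hP C n m in EM H.
have E1 : map_mx polyC (u *m w^T) = map_mx polyC u *m (map_mx polyC w)^T.
  by rewrite map_mxM map_trmx.
have E2 : map_mx polyC (h *: (p *m w^T + u *m r^T)) =
    h%:P *: (map_mx polyC p *m (map_mx polyC w)^T + map_mx polyC u *m (map_mx polyC r)^T).
  by rewrite map_mxZ map_mxD [map_mx _ (p *m _)]map_mxM [map_mx _ (u *m _)]map_mxM !map_trmx.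
rewrite E1 E2 final_trace in H.
move/eqP: H; rewrite mulf_eq0 (negbTE detn0) /= => /eqP.
done.
Qed.
End Final.

Theorem lemma7p4 (R : realType) (n m : nat)
    (B : 'I_m -> 'M[complex R]_(2 * n)) :
  is_basis_sp B ->
  forall (i : nat), (1 <= i <= n)%N ->
  forall v : 'cV[complex R]_(2 * n),
    \sum_(j < 2 * n) \sum_(k < m)
       brSV B (pder k (Qcoef B i)) v
       * linV m (B k *m vbas j) * linV m (vstar j) = 0.
Proof.
move=> hb i _ v.
have h2 : (2%:R : complex R) != 0 by rewrite Num.Theory.pnatr_eq0.
rewrite lhs_eq.
change (Dc (muv B v) (Dc (qv B) ((\det (Umx B))`_(2 * i))) = 0).
rewrite (coef_pD (@DcD _ n m (qv B))) (coef_pD (@DcD _ n m (muv B v))).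
by rewrite (main_poly h2 hb) coef0.
Qed.
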